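(* Let $\varepsilon\in\{1,-1\}$ and $n\ge2$. Then $$\sum_{\sigma\in\mathcal D^D_n}\varepsilon^{\ell_D(\sigma)}q^{\mathrm{Dmaj}(\sigma)}=\sum_{\sigma\in\mathcal D^\Delta_n}\varepsilon^{\ell_B(\sigma)}(\varepsilon q)^{\mathrm{fmaj}(\sigma)}+\frac{\varepsilon}{2}\left(\sum_{\sigma\in\mathcal D^B_{n-1}}\varepsilon^{\ell_B(\sigma)}q^{\mathrm{fmaj}(\sigma)}-\sum_{\sigma\in\mathcal D^B_{n-1}}\varepsilon^{\ell_B(\sigma)}(-q)^{\mathrm{fmaj}(\sigma)}\right).$$
   Context: $B_n$ is the set of words $\sigma=\sigma_1\cdots\sigma_n$ with $\sigma_i\in\{\pm1,\dots,\pm n\}$ and $|\sigma_1|\cdots|\sigma_n|$ a permutation of $[n]$; $\mathrm{neg}(\sigma)$ is the number of negative letters; $D_n=\{\sigma\in B_n:\mathrm{neg}(\sigma)\text{ even}\}$; $\Delta_n=\{\sigma\in B_n:\sigma_n>0\}$. A derangement is an element with $\sigma_i\ne i$ for all $i$; $\mathcal D^B_n,\mathcal D^D_n,\mathcal D^\Delta_n$ denote the derangements in $B_n,D_n,\Delta_n$. $\mathrm{inv}$ in usual order, $\ell_B(\sigma)=\mathrm{inv}(\sigma)-\sum_{i:\sigma_i<0}\sigma_i$, $\ell_D(\sigma)=\ell_B(\sigma)-\mathrm{neg}(\sigma)$. Order $\prec$: $-1\prec-2\prec\cdots\prec-N\prec1\prec\cdots\prec N$; $\mathrm{maj}_\prec(w)=\sum_{i:w_i\succ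 w_{i+1}}i$; $\mathrm{fmaj}(w)=2\mathrm{maj}_\prec(w)+\mathrm{neg}(w)$; $\mathrm{Dmaj}(\sigma)=\mathrm{fmaj}(\sigma_1\cdots\sigma_{n-1}|\sigma_n|)$. *)

(* Defs.v *)
From HB Require Import structures.
From mathcomp Require Import all_boot all_order all_algebra all_fingroup.
Set Implicit Arguments. Unset Strict Implicit. Unset Printing Implicit Defensive.
Import Order.TTheory GRing.Theory Num.Theory.
Local Open Scope ring_scope.

(* A signed permutation of [n] is encoded as a pair (s, b) : 'S_n * {ffun 'I_n -> bool};
   its word is sigma_i = (-1)^(b i) * (s i + 1), i = 1..n (stored 0-indexed). *)
Definition bperm (n : nat) := ('S_n * {ffun 'I_n -> bool})%type.

Definition bword n (x : bperm n) : seq int :=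
  [seq (if x.2 i then -1 else 1) * ((x.1 i).+1)%:Z | i <- enum 'I_n].

Definition negw (w : seq int) : nat := count (fun a => a < 0) w.

Definition invw (w : seq int) : nat :=
  \sum_(i < size w) \sum_(j < size w | (i < j)%N)
     nat_of_bool (nth (0:int) w j < nth (0:int) w i)%R.

(* ell_B = inv - sum_{w_i<0} w_i ;  -w_i = |w_i| for negative letters *)
Definition ellB (w : seq int) : nat := (invw w + \sum_(a <- w | (a < 0)%R) `|a|%N)%N.
(* ell_D = ell_B - neg (always >= 0, since ell_B >= neg) *)
Definition ellD (w : seq int) : nat := (ellB w - negw w)%N.

(* the order  -1 < -2 < ... < -N < 1 < ... < N  (strict), on nonzero letters *)
Definition prec_lt (a b : int) : bool :=
  if a < 0 then (0 < b) || ((b < 0) && (b < a)) else (0 < b) && (a < b).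

Definition majp (w : seq int) : nat :=
  \sum_(i < (size w).-1 | prec_lt (nth (0:int) w i.+1) (nth (0:int) w i)) i.+1.

Definition fmaj (w : seq int) : nat := (2 * majp w + negw w)%N.

Definition Dmaj (w : seq int) : nat :=
  fmaj (take (size w).-1 w ++ [:: Posz `|last (0:int) w|%N]).

Definition bderangement n (x : bperm n) : bool :=
  [forall i : 'I_n, nth (0:int) (bword x) i != (i.+1)%:Z].

Definition inD n (x : bperm n) : bool := ~~ odd (negw (bword x)).
Definition inDelta n (x : bperm n) : bool := 0 < last (0:int) (bword x).

(* Main.v *)
Require Import Defs.
From HB Require Import structures.
From mathcomp Require Import all_boot all_order all_algebra all_fingroup.
From mathcomp Require Import zify.
Import Order.TTheory GRing.Theory Num.Theory.
Local Open Scope ring_scope.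


Lemma count_sumord (T : Type) (x0 : T) (a : pred T) (s : seq T) :
  count a s = (\sum_(i < size s) nat_of_bool (a (nth x0 s i)))%N.
Proof.
rewrite -sum1_count (big_nth x0) big_mkord big_mkcond /=.
by apply: eq_bigr => i _; case: (a _).
Qed.

Lemma invw_rcons (u : seq int) c :
  invw (rcons u c) = (invw u + count (fun a => (c < a)%R) u)%N.
Proof.
rewrite /invw size_rcons big_ord_recr /=.
rewrite [X in (_ + X)%N]big_pred0; last first.
  by move=> j /=; rewrite ltnNge -ltnS ltn_ord.
rewrite addn0 (count_sumord _ 0) -big_split /=.
apply: eq_bigr => i _.
rewrite big_mkcond big_ord_recr /= ltn_ord (nth_rcons _ _ _ (size u)) ltnn eqxx (nth_rcons _ _ _ i) ltn_ord.
rewrite [in RHS]big_mkcond /=.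
congr (_ + _)%N.
by apply: eq_bigr => j _; rewrite !nth_rcons !ltn_ord.
Qed.

Lemma sumneg_rcons (u : seq int) c :
  (\sum_(a <- rcons u c | (a < 0)%R) `|a|%N =
   \sum_(a <- u | (a < 0)%R) `|a|%N + (if (c < 0)%R then `|c|%N else 0))%N.
Proof. by rewrite big_rcons. Qed.

Lemma negw_rcons (u : seq int) c : negw (rcons u c) = (negw u + (c < 0)%R)%N.
Proof. by rewrite /negw -cats1 count_cat /= addn0. Qed.

Lemma ellB_rcons (u : seq int) c :
  ellB (rcons u c) = (ellB u + count (fun a => (c < a)%R) u + (if (c < 0)%R then `|c|%N else 0))%N.
Proof. rewrite /ellB invw_rcons sumneg_rcons; lia. Qed.

Lemma majp_rcons (u : seq int) c :
  ~~ prec_lt c (last 0 u) -> majp (rcons u c) = majp u.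
Proof.
case: u => [|a u] H; first by rewrite /majp /= !big_ord0.
rewrite /majp size_rcons /= big_mkcond big_ord_recr /=.
have E i : (i <= size u)%N -> nth 0 (a :: rcons u c) i = nth 0 (a :: u) i.
  by move=> Hi; rewrite -rcons_cons nth_rcons /= ltnS Hi.
rewrite E; last by [].
rewrite nth_rcons ltnn eqxx.
have -> : nth 0 (a :: u) (size u) = last 0 (a :: u).
  by rewrite (last_nth 0).
rewrite (negbTE H) addn0 [in RHS]big_mkcond; apply: eq_bigr => i _ /=.
rewrite E; last exact: ltnW.
by rewrite nth_rcons ltn_ord.
Qed.

Set Implicit Arguments. Unset Strict Implicit.


Lemma sum_ltn n v : (v <= n)%N -> (\sum_(j < n) nat_of_bool (j < v)%N)%N = v.
Proof.
move=> Hv; rewrite -(big_mkord xpredT (fun j => nat_of_bool (j < v)%N)).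
rewrite /index_iota subn0 big_mkcond /=.
have -> : (\sum_(i <- iota 0 n) (if xpredT i then nat_of_bool (i < v)%N else 0%N))%N
   = (\sum_(i <- iota 0 n | (i < v)%N) 1)%N.
  by rewrite [in RHS]big_mkcond; apply: eq_bigr => i _ /=; case: (i < v)%N.
rewrite sum1_count -(subnKC Hv) iotaD count_cat add0n.
rewrite (@eq_in_count _ _ predT (iota 0 v)); last first.
  by move=> i; rewrite mem_iota add0n /= => ->.
rewrite count_predT size_iota (@eq_in_count _ _ pred0); last first.
  by move=> i; rewrite mem_iota /= => /andP[H _]; rewrite ltnNge H.
by rewrite count_pred0 addn0.
Qed.

Definition letter n (x : bperm n) (i : 'I_n) : int :=
  (if x.2 i then -1 else 1) * ((x.1 i).+1)%:Z.

Lemma bword_rcons m (x : bperm m.+1) :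
  bword x = rcons [seq letter x (widen_ord (leqnSn m) i) | i <- enum 'I_m]
                  (letter x ord_max).
Proof. by rewrite /bword enum_ordSr map_rcons -map_comp. Qed.

Lemma nth_bword n (x : bperm n) (i : 'I_n) : nth 0 (bword x) i = letter x i.
Proof.
by rewrite /bword (nth_map i) ?size_enum_ord ?ltn_ord // nth_ord_enum.
Qed.

Lemma letter_lt0 n (x : bperm n) i : (letter x i < 0) = x.2 i.
Proof. rewrite /letter; case: (x.2 i); lia. Qed.

Lemma letter_abs n (x : bperm n) i : `|letter x i|%N = (x.1 i).+1.
Proof. rewrite /letter; case: (x.2 i); lia. Qed.

Lemma count_split (s : seq int) (c c' : int) : c' <= c ->
  count (fun a => c' < a) s = (count (fun a => (c < a)%R) s + count (fun a => ((c' < a) && (a <= c))%R) s)%N.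
Proof.
move=> H; elim: s => //= a s ->.
case: (ltrP c a) => Ha; case: (ltrP c' a) => Ha'; rewrite /=; try lia.
Qed.

Definition uw m (x : bperm m.+1) := [seq letter x (widen_ord (leqnSn m) i) | i <- enum 'I_m].

Lemma widen_neq_max m (i : 'I_m) : (widen_ord (leqnSn m) i == ord_max) = false.
Proof. by rewrite -val_eqE /= ltn_eqF. Qed.

Lemma count_small m (x : bperm m.+1) :
  count (fun a => (- ((x.1 ord_max).+1)%:Z < a) && (a <= ((x.1 ord_max).+1)%:Z)) (uw x)
  = x.1 ord_max.
Proof.
rewrite /uw count_map -sum1_count big_enum_cond /= big_mkcond /=.
transitivity (\sum_(i < m) nat_of_bool (x.1 (widen_ord (leqnSn m) i) < x.1 ord_max)%N)%N.
  apply: eq_bigr => i _ /=.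
  have : x.1 (widen_ord (leqnSn m) i) != x.1 ord_max.
    by rewrite (inj_eq perm_inj) widen_neq_max.
  rewrite -val_eqE /letter /=.
  case: (x.2 _); move: (nat_of_ord (x.1 _)) (nat_of_ord (x.1 ord_max)) => a b Hab.
    case: ifP => H; move: H Hab; lia.
  case: ifP => H; move: H Hab; lia.
transitivity (\sum_(i < m.+1) nat_of_bool (x.1 i < x.1 ord_max)%N)%N.
  by rewrite big_ord_recr /= ltnn addn0.
rewrite (reindex_inj (@perm_inj _ x.1^-1)) /=.
under eq_bigr => j _ do rewrite permKV.
by apply: sum_ltn; apply: ltnW.
Qed.

Definition flip m (x : bperm m.+1) : bperm m.+1 :=
  (x.1, [ffun i => if i == ord_max then ~~ x.2 i else x.2 i]).

Lemma flipK m : involutive (@flip m).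
Proof.
move=> [s b]; rewrite /flip /=; congr (_, _); apply/ffunP => i; rewrite !ffunE.
by case: eqP => // ->; rewrite negbK.
Qed.

Lemma uw_flip m (x : bperm m.+1) : uw (flip x) = uw x.
Proof. by apply: eq_map => i; rewrite /letter /= ffunE widen_neq_max. Qed.

Lemma bword_pos m (x : bperm m.+1) : ~~ x.2 ord_max ->
  bword x = rcons (uw x) (Posz (x.1 ord_max).+1).
Proof. by move=> H; rewrite bword_rcons /letter (negbTE H) mul1r. Qed.

Lemma bword_flip m (x : bperm m.+1) : ~~ x.2 ord_max ->
  bword (flip x) = rcons (uw x) (- Posz (x.1 ord_max).+1).
Proof.
move=> H; rewrite bword_rcons -/(uw _) uw_flip /letter /= ffunE eqxx (negbTE H).
by rewrite /= mulN1r.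
Qed.

Lemma Dmaj_rcons u c : Dmaj (rcons u c) = fmaj (rcons u (Posz `|c|%N)).
Proof. by rewrite /Dmaj size_rcons /= -cats1 take_size_cat // last_cat /= cats1. Qed.

Lemma odd_fmaj w : odd (fmaj w) = odd (negw w).
Proof. by rewrite /fmaj oddD oddM. Qed.

Lemma negw_le_ellB w : (negw w <= ellB w)%N.
Proof.
rewrite /ellB /negw -sum1_count; apply: leq_trans (leq_addl _ _).
by apply: leq_sum => a Ha; rewrite absz_gt0; move: Ha; case: eqP => // ->.
Qed.

Lemma odd_ellD w : odd (ellD w) = odd (ellB w) (+) odd (negw w).
Proof. by rewrite /ellD oddB // negw_le_ellB. Qed.

Section Flip.
Variables (m : nat) (x : bperm m.+1).
Hypothesis Hx : ~~ x.2 ord_max.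

Lemma Dmaj_pos : Dmaj (bword x) = fmaj (bword x).
Proof. by rewrite bword_pos // Dmaj_rcons. Qed.

Lemma Dmaj_flip : Dmaj (bword (flip x)) = fmaj (bword x).
Proof. by rewrite bword_flip // bword_pos // Dmaj_rcons. Qed.

Lemma odd_negw_flip : odd (negw (bword (flip x))) = ~~ odd (negw (bword x)).
Proof.
rewrite bword_flip // bword_pos // !negw_rcons /=.
by rewrite addn0 addn1 oddS.
Qed.

Lemma odd_ellB_flip : odd (ellB (bword (flip x))) = ~~ odd (ellB (bword x)).
Proof.
rewrite bword_flip // bword_pos // !ellB_rcons.
rewrite (count_split _ (c := Posz (x.1 ord_max).+1)) // count_small.
have -> : (- Posz (x.1 ord_max).+1 < 0) = true by [].
rewrite /= addn0; rewrite !oddD /=.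
match goal with |- context[odd (count ?P ?s)] => case: (odd (count P s)) end;
case: (odd (invw _)); case: (odd (x.1 _)); case: (odd (\sum_(_ <- _ | _) _)).
all: by [].
Qed.

End Flip.

Definition ext m (z : bperm m) : bperm m.+1 :=
  (lift_perm ord_max ord_max z.1,
   [ffun k => if unlift ord_max k is Some j then z.2 j else false]).

Lemma widen_lift m (j : 'I_m) : widen_ord (leqnSn m) j = lift ord_max j.
Proof. by apply: val_inj; rewrite /= /bump leqNgt ltn_ord. Qed.

Lemma letter_ext_widen m (z : bperm m) i :
  letter (ext z) (widen_ord (leqnSn m) i) = letter z i.
Proof.
by rewrite widen_lift /letter /= ffunE liftK lift_perm_lift lift_max.
Qed.

Lemma letter_ext_max m (z : bperm m) : letter (ext z) ord_max = Posz m.+1.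
Proof. by rewrite /letter /= ffunE unlift_none lift_perm_id mul1r. Qed.

Lemma bword_ext m (z : bperm m) : bword (ext z) = rcons (bword z) (Posz m.+1).
Proof.
rewrite bword_rcons letter_ext_max; congr rcons.
by apply: eq_map => i; rewrite letter_ext_widen.
Qed.

Lemma bword_bounded m (z : bperm m) : all (fun a => a <= Posz m) (bword z).
Proof.
rewrite /bword all_map; apply/allP => i _ /=.
rewrite /letter; have := ltn_ord (z.1 i); case: (z.2 i); move: (nat_of_ord _) => a; lia.
Qed.

Lemma ellB_ext m (z : bperm m) : ellB (bword (ext z)) = ellB (bword z).
Proof.
rewrite bword_ext ellB_rcons /= addn0 (@eq_in_count _ _ pred0) ?count_pred0 ?addn0 //.
move=> a Ha /=; have := allP (bword_bounded z) a Ha; lia.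
Qed.

Lemma negw_ext m (z : bperm m) : negw (bword (ext z)) = negw (bword z).
Proof. by rewrite bword_ext negw_rcons addn0. Qed.

Lemma fmaj_ext m (z : bperm m) : fmaj (bword (ext z)) = fmaj (bword z).
Proof.
rewrite /fmaj negw_ext; congr (_ + _)%N; congr (2 * _)%N.
rewrite bword_ext majp_rcons //.
have : last 0 (bword z) <= Posz m.
  have := mem_last 0 (bword z); rewrite inE => /orP[/eqP -> //|].
  by move/(allP (bword_bounded z)).
rewrite /prec_lt; move: (last 0 _) => b Hb.
have -> : (Posz m.+1 < 0) = false by [].
by apply/negP => /andP[_]; lia.
Qed.

Definition derm m (x : bperm m.+1) :=
  [forall i : 'I_m, letter x (widen_ord (leqnSn m) i) != (i.+1)%:Z].

Lemma der_split m (x : bperm m.+1) :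
  bderangement x = derm x && (letter x ord_max != (m.+1)%:Z).
Proof.
apply/forallP/andP => [H|[/forallP Hd Hm] i].
  split; last by have := H ord_max; rewrite nth_bword.
  by apply/forallP => i; have := H (widen_ord (leqnSn m) i); rewrite nth_bword.
rewrite nth_bword; have [j ->|->] := unliftP ord_max i => //.
by rewrite -widen_lift /= Hd.
Qed.

Lemma letter_max_neq m (x : bperm m.+1) :
  (letter x ord_max != (m.+1)%:Z) = x.2 ord_max || (x.1 ord_max != ord_max).
Proof.
rewrite -val_eqE /letter /=; have := ltn_ord (x.1 ord_max).
case: (x.2 _); move: (nat_of_ord _) => a Ha /=.
  by apply/negP; lia.
by apply/idP/idP; lia.
Qed.

Lemma derm_flip m (x : bperm m.+1) : derm (flip x) = derm x.
Proof.
by apply: eq_forallb => i; rewrite /letter /= ffunE widen_neq_max.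
Qed.

Lemma derm_ext m (z : bperm m) : derm (ext z) = bderangement z.
Proof.
by apply: eq_forallb => i; rewrite letter_ext_widen nth_bword.
Qed.

Lemma inDelta_E m (x : bperm m.+1) : inDelta x = ~~ x.2 ord_max.
Proof.
rewrite /inDelta bword_rcons last_rcons /letter; case: (x.2 _) => /=; lia.
Qed.

Section Restr.
Variable m : nat.
Definition ulsf (s : 'S_m.+1) (k : 'I_m) : 'I_m :=
  odflt k (unlift (s ord_max) (s (lift ord_max k))).

Lemma ulsfK (s : 'S_m.+1) k : lift (s ord_max) (ulsf s k) = s (lift ord_max k).
Proof.
rewrite /ulsf; have:= neq_lift ord_max k.
by rewrite -(can_eq (permK s)) => /unlift_some[] ? ? ->.
Qed.

Lemma inj_ulsf (s : 'S_m.+1) : injective (ulsf s).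
Proof.
move=> k1 k2 E; apply: (@lift_inj _ ord_max); apply: (can_inj (permK s)).
by rewrite -!ulsfK E.
Qed.

Definition restr (y : bperm m.+1) : bperm m :=
  (perm (@inj_ulsf y.1), [ffun j => y.2 (lift ord_max j)]).

Lemma sum_ext (F : bperm m.+1 -> {poly rat}) (P : pred (bperm m.+1)) :
  \sum_(y : bperm m.+1 | [&& ~~ y.2 ord_max, y.1 ord_max == ord_max & P y]) F y
  = \sum_(z : bperm m | P (ext z)) F (ext z).
Proof.
rewrite (reindex (@ext m)); last first.
  exists restr => [z _ | y].
    case: z => s b; rewrite /restr /ext /=; congr (_, _).
      by apply/permP => k; rewrite permE /ulsf lift_perm_lift lift_perm_id liftK.
    by apply/ffunP => j; rewrite !ffunE liftK.
  rewrite inE => /and3P[Hb /eqP Hs _].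
  case: y Hb Hs => s b /= Hb Hs; rewrite /restr /ext /=; congr (_, _).
    apply/permP => k; case: (unliftP ord_max k) => [k'|] ->.
      by rewrite lift_perm_lift permE -{1}Hs ulsfK.
    by rewrite lift_perm_id Hs.
  apply/ffunP => k; rewrite !ffunE; case: (unliftP ord_max k) => [k'|] ->.
    by rewrite ffunE.
  by apply/esym/negbTE.
apply: eq_big => [z|//]; rewrite /ext /= ffunE unlift_none lift_perm_id eqxx.
by [].
Qed.
End Restr.


Section Main.
Variable eps : rat.
Hypothesis Heps : eps = 1 \/ eps = -1.

Lemma sgn k : eps ^+ k = eps ^+ (odd k).
Proof. by case: Heps => ->; rewrite ?expr1n // signr_odd. Qed.

Definition G m (x : bperm m) : {poly rat} :=
  (eps ^+ ellB (bword x))%:P * (eps%:P * 'X) ^+ fmaj (bword x).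

Lemma GE m (x : bperm m) :
  G x = (eps ^+ (odd (ellB (bword x)) (+) odd (negw (bword x))))%:P * 'X ^+ fmaj (bword x).
Proof.
rewrite /G exprMn -(rmorphXn polyC) mulrA -polyCM -exprD (sgn (_ + _)) oddD odd_fmaj.
by [].
Qed.

Lemma f_pos m (x : bperm m.+1) : ~~ x.2 ord_max ->
  (eps ^+ ellD (bword x))%:P * 'X ^+ Dmaj (bword x) = G x.
Proof. by move=> H; rewrite GE Dmaj_pos // sgn odd_ellD. Qed.

Lemma f_flip m (x : bperm m.+1) : ~~ x.2 ord_max ->
  (eps ^+ ellD (bword (flip x)))%:P * 'X ^+ Dmaj (bword (flip x)) = G x.
Proof.
move=> H; rewrite GE Dmaj_flip // sgn odd_ellD odd_ellB_flip // odd_negw_flip //.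
by rewrite addbN addNb negbK.
Qed.

Lemma C_eq m :
  (eps / 2)%:P *
      (\sum_(x : bperm m | bderangement x)
          (eps ^+ ellB (bword x))%:P * 'X ^+ fmaj (bword x)
       - \sum_(x : bperm m | bderangement x)
          (eps ^+ ellB (bword x))%:P * (- 'X) ^+ fmaj (bword x))
  = \sum_(z : bperm m | bderangement z && odd (negw (bword z))) G (ext z).
Proof.
rewrite -sumrB mulr_sumr (bigID (fun z : bperm m => odd (negw (bword z)))) /=.
rewrite [X in _ + X]big1 ?addr0; last first.
  move=> z /andP[_ Hz]; rewrite exprNn -signr_odd odd_fmaj (negbTE Hz) /=.
  by rewrite mul1r subrr mulr0.
apply: eq_bigr => z /andP[_ Hz].
rewrite exprNn -signr_odd odd_fmaj Hz /= /G ellB_ext fmaj_ext.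
rewrite exprMn -(rmorphXn polyC) (sgn (fmaj _)) odd_fmaj Hz /=.
have h : (eps / 2)%:P *+ 2 = eps%:P :> {poly rat}.
  by rewrite -(rmorphMn polyC) -mulr_natr divfK.
rewrite -h; move: ((eps / 2)%:P) => A; move: (_%:P) ('X^_) => c X.
by rewrite expr1 mulN1r mulrN opprK mulr2n mulrDl !mulrDr mulrCA.
Qed.
End Main.


Unset Implicit Arguments.

Theorem lemma4p8 (eps : rat) (n : nat) :
  (eps = 1 \/ eps = -1) -> (2 <= n)%N ->
  \sum_(x : bperm n | bderangement x && inD x)
      (eps ^+ ellD (bword x))%:P * 'X ^+ Dmaj (bword x)
  = \sum_(x : bperm n | bderangement x && inDelta x)
      (eps ^+ ellB (bword x))%:P * (eps%:P * 'X) ^+ fmaj (bword x)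
    + (eps / 2)%:P *
      (\sum_(x : bperm n.-1 | bderangement x)
          (eps ^+ ellB (bword x))%:P * 'X ^+ fmaj (bword x)
       - \sum_(x : bperm n.-1 | bderangement x)
          (eps ^+ ellB (bword x))%:P * (- 'X) ^+ fmaj (bword x)) :> {poly rat}.
Proof.
move=> Heps Hn; case: n Hn => [|m] Hn.
  exfalso; move: Hn; apply/negP; by [].
rewrite [m.+1.-1]/= (C_eq Heps).
have -> : \sum_(z : bperm m | bderangement z && odd (negw (bword z))) G eps (ext z)
   = \sum_(y : bperm m.+1 | [&& ~~ y.2 ord_max, y.1 ord_max == ord_max &
                            derm y && odd (negw (bword y))]) G eps y.
  rewrite sum_ext; apply: eq_bigl => z.
  by rewrite derm_ext negw_ext.
set f := fun x : bperm m.+1 => (eps ^+ ellD (bword x))%:P * 'X ^+ Dmaj (bword x).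
pose A1 := fun y : bperm m.+1 =>
  if bderangement (flip y) && inD (flip y) && (flip y).2 ord_max then f (flip y) else 0.
pose A2 := fun y : bperm m.+1 =>
  if bderangement y && inD y && ~~ y.2 ord_max then f y else 0.
pose R1 := fun y : bperm m.+1 =>
  if bderangement y && inDelta y then G eps y else 0.
pose C1 := fun y : bperm m.+1 =>
  if [&& ~~ y.2 ord_max, y.1 ord_max == ord_max, derm y & odd (negw (bword y))]
  then G eps y else 0.
have S1 : \sum_(x : bperm m.+1 | bderangement x && inD x) f x
          = \sum_y A1 y + \sum_y A2 y.
  rewrite (bigID (fun x : bperm m.+1 => x.2 ord_max)) /=.
  rewrite (reindex_inj (can_inj (@flipK m))).
  congr (_ + _); rewrite big_mkcond; apply: eq_bigr => y _; reflexivity.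
have S2 : \sum_(x : bperm m.+1 | bderangement x && inDelta x)
      (eps ^+ ellB (bword x))%:P * (eps%:P * 'X) ^+ fmaj (bword x)
          = \sum_y R1 y.
  by rewrite big_mkcond; apply: eq_bigr => y _.
have S3 : \sum_(y : bperm m.+1 | [&& ~~ y.2 ord_max, y.1 ord_max == ord_max,
                   derm y & odd (negw (bword y))]) G eps y = \sum_y C1 y.
  by rewrite big_mkcond; apply: eq_bigr => y _.
rewrite S1 S2 S3 -!big_split; apply: eq_bigr => y _.
change (A1 y + A2 y = R1 y + C1 y).
have F2 : (flip y).2 ord_max = ~~ y.2 ord_max by rewrite /flip /= ffunE eqxx.
rewrite /A1 /A2 /R1 /C1 F2 inDelta_E.
case Hb : (y.2 ord_max).
  by rewrite /= !andbF addr0.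
have Hx : ~~ y.2 ord_max by rewrite Hb.
rewrite /f (f_flip Heps Hx) (f_pos Heps Hx) /inD odd_negw_flip // negbK.
rewrite !der_split derm_flip !letter_max_neq F2 Hb /=.
case: (derm y); case: (y.1 ord_max == ord_max); case: (odd (negw (bword y))).
all: rewrite /= ?addr0 ?add0r //.
Qed.
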